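(* Let $(A,C,k)$ be an instance and $W$ an affordable committee. Let $\overline{W}$ be obtained from $W$ by seq-CC completion. Then the representation ratio of $\overline{W}$ is at least $1-\frac1e$.
   Context: An instance $(A,C,k)$ consists of a finite nonempty candidate set $C$, voters $N=\{1,\dots,n\}$, approval sets $A_i\subseteq C$, and a committee size $1\le k\le|C|$. A committee is $W\subseteq C$ with $|W|\le k$. $\mathrm{cov}(W)=|\{i: A_i\cap W\ne\emptyset\}|$; the representation ratio is $\mathrm{cov}(W)/\max\{\mathrm{cov}(W'):|W'|=k\}$. The seq-CC completion of $W$ repeatedly adds to the current committee a candidate $c$ not in it that maximizes $\mathrm{cov}$ of the committee with $c$ added (ties arbitrary), until the committee has size $k$. $W$ is affordable if there are $p_i:C\to\mathbb{R}_{\ge0}$ ($i\in N$) with $p_i(c)=0$ for $c\notin A_i$, $\sum_c p_i(c)\le k/n$, $\sum_i p_i(c)=1$ for $c\in W$, $\sum_i p_i(c)=0$ for $c\notin W$. *)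

(* Defs.v *)
From HB Require Import structures.
From mathcomp Require Import all_boot all_order all_algebra.
From mathcomp Require Import all_classical all_reals.
From mathcomp Require Import sequences exp.
Set Implicit Arguments. Unset Strict Implicit. Unset Printing Implicit Defensive.
Import Order.TTheory GRing.Theory Num.Theory.
Local Open Scope ring_scope.

Section Defs.
Variables (C : finType) (n : nat) (A : 'I_n -> {set C}).

Definition cov (W : {set C}) : nat := #|[set i : 'I_n | [exists c in W, c \in A i]]|.

Definition maxcov (k : nat) : nat := (\max_(W' : {set C} | #|W'| == k) cov W')%N.

Definition affordable (R : realType) (k : nat) (W : {set C}) : Prop :=
  exists p : 'I_n -> C -> R,
    [/\ forall i c, 0 <= p i c,
        forall i c, c \notin A i -> p i c = 0,
        forall i, \sum_(c : C) p i c <= k%:R / n%:R,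
        forall c, c \in W -> \sum_(i < n) p i c = 1 &
        forall c, c \notin W -> \sum_(i < n) p i c = 0].

(* seqcc_completion k S T : T is a possible outcome (with arbitrary
   tie-breaking) of the seq-CC completion of S to size k. *)
Inductive seqcc_completion (k : nat) : {set C} -> {set C} -> Prop :=
| seqcc_done (S : {set C}) : #|S| = k -> seqcc_completion k S S
| seqcc_step (S : {set C}) (c : C) (T : {set C}) :
    (#|S| < k)%N -> c \notin S ->
    (forall c', c' \notin S -> (cov (c' |: S) <= cov (c |: S))%N) ->
    seqcc_completion k (c |: S) T -> seqcc_completion k S T.
End Defs.

(* Main.v *)
Require Import Defs.
From HB Require Import structures.
From mathcomp Require Import all_boot all_order all_algebra.
From mathcomp Require Import all_classical all_reals.
From mathcomp Require Import sequences exp.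
From mathcomp Require Import ring lra.
Import Order.TTheory GRing.Theory Num.Theory.
Local Open Scope ring_scope.

Section Aux.
Variables (C : finType) (n : nat) (A : 'I_n -> {set C}).

Definition Cv (W : {set C}) : {set 'I_n} := [set i | [exists c in W, c \in A i]].

Lemma covE W : cov A W = #|Cv W|.
Proof. by []. Qed.

Lemma Cv_sub (S T : {set C}) : S \subset T -> Cv S \subset Cv T.
Proof.
move=> ST; apply/fintype.subsetP => i; rewrite !inE => /existsP [c /andP [cS ci]].
by apply/existsP; exists c; rewrite (fintype.subsetP ST).
Qed.

Lemma cov_mono (S T : {set C}) : S \subset T -> (cov A S <= cov A T)%N.
Proof. by move=> ST; rewrite !covE subset_leq_card // Cv_sub. Qed.

Lemma card_bigcup_le (O : {set C}) (F : C -> {set 'I_n}) :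
  (#|\bigcup_(o in O) F o| <= \sum_(o in O) #|F o|)%N.
Proof.
apply: (big_ind2 (fun (X : {set 'I_n}) (m : nat) => #|X| <= m)%N) => //.
- by rewrite cards0.
- move=> X1 m1 X2 m2 h1 h2; apply: leq_trans (leq_card_setU X1 X2) _.
  exact: leq_add.
Qed.

Lemma greedy (S : {set C}) (c : C) (k : nat) (O : {set C}) :
  (forall c', c' \notin S -> (cov A (c' |: S) <= cov A (c |: S))%N) ->
  (#|O| <= k)%N ->
  (cov A O <= cov A S + k * (cov A (c |: S) - cov A S))%N.
Proof.
move=> hmax hO.
have h1 : Cv O \subset (Cv O :\: Cv S) :|: Cv S.
  by apply/fintype.subsetP => i iO; rewrite finset.in_setU finset.in_setD iO; case: (i \in Cv S).
have h2 : Cv O :\: Cv S \subset \bigcup_(o in O) (Cv (o |: S) :\: Cv S).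
  apply/fintype.subsetP => i; rewrite !inE => /andP [iS /existsP [o /andP [oO oi]]].
  apply/bigcupP; exists o => //; rewrite !inE iS /=.
  by apply/existsP; exists o; rewrite !inE eqxx oi.
have h3 : forall o, o \in O -> (#|Cv (o |: S) :\: Cv S| <= cov A (c |: S) - cov A S)%N.
  move=> o _; rewrite cardsDS; last by apply: Cv_sub; apply: finset.subsetUr.
  case: (boolP (o \in S)) => oS.
    by rewrite (finset.setUidPr _) ?subnn // finset.sub1set.
  by apply: leq_sub2r; apply: hmax.
rewrite covE; apply: leq_trans (subset_leq_card h1) _.
apply: leq_trans (leq_card_setU _ _) _; rewrite addnC -covE leq_add2l.
apply: leq_trans (subset_leq_card h2) _.
apply: leq_trans (card_bigcup_le _ _) _.
have h4 := leq_sum (index_enum C) h3; rewrite sum_nat_const in h4.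
apply: leq_trans h4 _.
by rewrite leq_mul2r hO orbT.
Qed.

End Aux.
Arguments Cv {C n}.
Arguments covE {C n}.
Arguments greedy {C n}.

Lemma bern (R : realType) (r : R) (w : nat) :
  0 <= r -> w%:R * r <= 1 -> 1 - w%:R * r <= (1 - r) ^+ w.
Proof.
move=> r0; elim: w => [|w IH] h.
  by rewrite mul0r subr0 expr0.
move: h; rewrite -natr1 mulrDl mul1r => h.
have wr0 : 0 <= w%:R * r by rewrite mulr_ge0 ?ler0n.
have h1 : w%:R * r <= 1 by lra.
have h2 : 0 <= 1 - r by lra.
rewrite exprSr.
apply: le_trans (_ : (1 - w%:R * r) * (1 - r) <= _).
  have : 0 <= w%:R * r * r by rewrite mulr_ge0.
  move=> h3; rewrite mulrBl mul1r mulrBr mulr1; lra.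
by rewrite ler_wpM2r // IH.
Qed.

Lemma cov_le_n (C : finType) (n : nat) (A : 'I_n -> {set C}) W : (cov A W <= n)%N.
Proof. by rewrite covE; apply: leq_trans (max_card _) _; rewrite card_ord. Qed.

Lemma afford_bound {R : realType} {C : finType} {n : nat} {A : 'I_n -> {set C}}
  {k : nat} {W : {set C}} : (0 < n)%N -> affordable A R k W ->
  #|W|%:R * n%:R <= (cov A W)%:R * k%:R :> R.
Proof.
move=> n0 [p [p0 pA psum pW pnW]].
have e1 : #|W|%:R = \sum_(c in W) \sum_(i < n) p i c :> R.
  transitivity (\sum_(c in W) (1:R)); first by rewrite sumr_const.
  by apply: eq_bigr => c cW; rewrite pW.
have h : #|W|%:R <= \sum_(i < n) (if i \in Cv A W then k%:R / n%:R else 0) :> R.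
  rewrite e1 exchange_big /=; apply: ler_sum => i _.
  case: ifP => iW.
    apply: le_trans (psum i).
    rewrite [X in _ <= X](bigID (mem W)) /= lerDl; apply: sumr_ge0 => c _; exact: p0.
  rewrite big1 // => c cW; apply: pA; apply/negP => ci.
  by move: iW; rewrite inE => /negbT/negP; apply; apply/existsP; exists c; rewrite cW.
rewrite -big_mkcond /= sumr_const -covE in h.
have nR : 0 < n%:R :> R by rewrite ltr0n.
apply: le_trans (ler_wpM2r (ltW nR) h) _.
rewrite -[_ *+ cov A W]mulr_natr mulrAC -(mulrA k%:R) mulVf ?mulr1; last by rewrite gt_eqF.
by rewrite mulrC.
Qed.

Theorem theorem5 (R : realType) (C : finType) (n : nat) (A : 'I_n -> {set C})
    (k : nat) (W Wbar : {set C}) :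
  (0 < n)%N -> (1 <= k)%N -> (k <= #|C|)%N ->
  (#|W| <= k)%N -> affordable A R k W ->
  seqcc_completion A k W Wbar ->
  (1 - (expR (1 : R))^-1) * (maxcov A k)%:R <= (cov A Wbar)%:R.
Proof.
move=> n0 k1 kC wk aff comp.
have hwn := afford_bound n0 aff.
set M := (maxcov A k)%:R : R.
set r := (k%:R : R)^-1.
set q := 1 - r.
have kpos : 0 < k%:R :> R by rewrite ltr0n.
have kr : k%:R * r = 1 by rewrite /r mulfV // gt_eqF.
have r0 : 0 <= r by rewrite /r invr_ge0 ltW.
have r1 : r <= 1 by rewrite /r invf_le1 // ler1n.
have q0 : 0 <= q by rewrite /q subr_ge0.
have M0 : 0 <= M by rewrite ler0n.
have Mn : M <= n%:R.
  rewrite ler_nat; apply/bigmax_leqP => O _; exact: cov_le_n.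
have greal : forall (S : {set C}) (c : C), c \notin S ->
    (forall c', c' \notin S -> (cov A (c' |: S) <= cov A (c |: S))%N) ->
    Num.max (M - (cov A (c |: S))%:R) 0 <= q * Num.max (M - (cov A S)%:R) 0.
  move=> S c cS hmax.
  have hM : (maxcov A k <= cov A S + k * (cov A (c |: S) - cov A S))%N.
    apply/bigmax_leqP => O /eqP hO; apply: greedy hmax _; by rewrite hO.
  have hs : (cov A S <= cov A (c |: S))%N by apply: cov_mono; apply: finset.subsetUr.
  move: hM; rewrite -(ler_nat R) natrD natrM natrB // -/M.
  move: (cov A S)%:R (cov A (c |: S))%:R hs => s s'; rewrite -(ler_nat R) => hs hM.
  have hr := ler_wpM2l r0 hM.
  have e : r * (k%:R * (s' - s)) = s' - s by rewrite mulrA [r * _]mulrC kr mul1r.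
  rewrite ge_max; apply/andP; split.
    apply: le_trans (_ : q * (M - s) <= _); last first.
      by apply: ler_wpM2l => //; rewrite le_max lexx.
    rewrite /q; lra.
  by apply: mulr_ge0 => //; rewrite le_max lexx orbT.
have main : forall S T, seqcc_completion A k S T ->
    M - (cov A T)%:R <= q ^+ (k - #|S|) * Num.max (M - (cov A S)%:R) 0.
  move=> S T; elim => {S T}.
    move=> S hS; rewrite hS subnn expr0 mul1r le_max lexx //.
  move=> S c T hlt cS hmax _ IH.
  rewrite cardsU1 cS /= add1n in IH.
  rewrite -(subnSK hlt) exprSr -mulrA.
  apply: le_trans IH _; apply: ler_wpM2l; first exact: exprn_ge0.
  exact: greal.
have hW := main _ _ comp.
set w := #|W| in hW hwn wk.
set cW := (cov A W)%:R in hW hwn.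
have wr1 : w%:R * r <= 1.
  apply: le_trans (_ : k%:R * r <= _); last by rewrite kr.
  by apply: ler_wpM2r => //; rewrite ler_nat.
have hb := @bern R r w r0 wr1.
have hMw : M * w%:R * r <= cW.
  have h1 : M * w%:R <= n%:R * w%:R by apply: ler_wpM2r => //; rewrite ler0n.
  have h2 : M * w%:R * r <= cW * k%:R * r.
    apply: ler_wpM2r => //; apply: le_trans h1 _; by rewrite mulrC.
  by rewrite -[cW * _ * r]mulrA kr mulr1 in h2.
have hmax : Num.max (M - cW) 0 <= M * q ^+ w.
  rewrite ge_max; apply/andP; split.
    apply: le_trans (_ : M * (1 - w%:R * r) <= _); last by apply: ler_wpM2l.
    have : M * (1 - w%:R * r) = M - M * w%:R * r by rewrite mulrBr mulr1 mulrA.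
    move=> ->; lra.
  by apply: mulr_ge0 => //; apply: exprn_ge0.
have hqk : q ^+ k <= expR (-1).
  have e1 : q <= expR (- r) by rewrite /q; apply: le_trans (expR_ge1Dx _).
  have := lerXn2r k (_ : q \in Num.nneg) (_ : expR (- r) \in Num.nneg) e1.
  rewrite -expRM_natl mulrN kr; apply.
    by rewrite qualifE.
  by rewrite qualifE /= expR_ge0.
have fin : M - (cov A Wbar)%:R <= M * expR (-1).
  apply: le_trans hW _.
  apply: le_trans (_ : q ^+ (k - w) * (M * q ^+ w) <= _).
    by apply: ler_wpM2l => //; apply: exprn_ge0.
  rewrite mulrCA -exprD subnK //; by apply: ler_wpM2l.
rewrite expRN in fin; lra.
Qed.
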